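(* Let $n\ge1$ and $\mathbf s\in\mathbb C^n$. On the $YQ(1)$-module $V(\mathbf s)$ each $Z_{2i}$ ($i\ge0$) acts by a scalar $\chi_{2i}$, and $\sum_{i\ge0}\chi_{2i}u^{-2i-1}=\dfrac{\sum_{i\ge0}\sigma_{2i+1}(\mathbf s)u^{-2i-1}}{1+\sum_{i\ge1}\sigma_{2i}(\mathbf s)u^{-2i}}$, where $\sigma_p$ is the $p$-th elementary symmetric polynomial ($\sigma_p=0$ for $p>n$).
   Context: $YQ(1)$ is the unital superalgebra generated by $T_{i,j}^{(m)}$, $m\ge1$, $i,j\in\{\pm1\}$, of parity $p(i)+p(j)$ ($p(1)=0,p(-1)=1$), with $T_{i,j}(u)=\delta_{ij}+\sum_m T^{(m)}_{i,j}u^{-m}$ and defining relations $(u^2-v^2)[T_{i,j}(u),T_{k,l}(v)](-1)^{p(i)p(k)+p(i)p(l)+p(k)p(l)}=(u+v)(T_{k,j}(u)T_{i,l}(v)-T_{k,j}(v)T_{i,l}(u))-(u-v)(T_{-k,j}(u)T_{-i,l}(v)-T_{k,-j}(v)T_{i,-l}(u))(-1)^{p(k)+p(l)}$ and $T_{i,j}(-u)=T_{-i,-j}(u)$ (supercommutators). Set $\eta_i=(-\tfrac12)^i(\operatorname{ad}T^{(2)}_{1,1})^i(T^{(1)}_{1,-1})$ and $Z_{2i}=\tfrac12[\eta_0,\eta_{2i}]$ (central elements). Let $U(\mathfrak h_n)$ be the superalgebra generated by odd $\xi_1,\dots,\xi_n$ with $\xi_i\xi_j+\xi_j\xi_i=0$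 ($i\ne j$), $x_i=\xi_i^2$. There is a surjective homomorphism $\varphi_n:YQ(1)\to W^n\subset U(\mathfrak h_n)$ onto the principal finite $W$-algebra of $Q(n)$ with $\varphi_n(T^{(k)}_{1,1})=(-1)^k[\Sigma_k]_{even}$, $\varphi_n(T^{(k)}_{-1,1})=(-1)^k[\Sigma_k]_{odd}$, $\Sigma_k=\sum_{i_1<\dots<i_k}\prod_{j=1}^k(x_{i_j}+(-1)^{k-j}\xi_{i_j})$ ($0$ for $k>n$). $V(\mathbf s)$ is a simple $\mathbb Z_2$-graded $U(\mathfrak h_n)$-module with $x_i$ acting by $s_i$, made into a $YQ(1)$-module via $\varphi_n$. *)

(* Defs.v *)
(* Complex numbers are modelled as  complex R = R[i]  for
   R : realType (mathcomp-reals), i.e. the algebraic closure of the real field. *)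
From HB Require Import structures.
From mathcomp Require Import all_boot all_order all_algebra.
From mathcomp Require Import complex.
From mathcomp Require Import reals.
Set Implicit Arguments. Unset Strict Implicit. Unset Printing Implicit Defensive.
Import Order.TTheory GRing.Theory Num.Theory.
Local Open Scope ring_scope.

(* A finite-dimensional Z_2-graded module over U(h_n) is given concretely by *)
(*   - its (nonzero) dimension d.+1, vectors being column vectors 'cV_(d.+1), *)
(*   - the parity operator P (P = +1 on the even part, -1 on the odd part),  *)
(*   - the matrices Xi i by which the odd generators xi_i act.               *)
(* The action of an element a of U(h_n) is the matrix rho(a), acting on the   *)
(* left (v |-> rho(a) *m v).  All constructions below compute the images     *)
(* under rho of the elements of U(h_n) (resp. of YQ(1) via phi_n).           *)

Section Module.
Variables (K : fieldType) (n d : nat).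
Local Notation M := 'M[K]_d.+1.
Variables (P : M) (Xi : 'I_n -> M).

Definition is_graded_hn_module : Prop :=
  [/\ P * P = 1,
      forall i, P * Xi i = - (Xi i * P)
    & forall i j, i != j -> Xi i * Xi j + Xi j * Xi i = 0].

(* x_i = xi_i^2 acts by s_i. *)
Definition x_acts_by (s : 'I_n -> K) : Prop :=
  forall i, Xi i * Xi i = (s i)%:M.

(* A subspace (row space of U, made of transposed vectors) is a graded
   submodule iff it is stable under P and all the Xi i. *)
Definition graded_submodule (U : 'M[K]_d.+1) : bool :=
  stablemx U P^T && [forall i, stablemx U (Xi i)^T].

Definition graded_simple : Prop :=
  forall U : 'M[K]_d.+1, graded_submodule U -> (U == 0) || row_full U.

Definition xmx (i : 'I_n) : M := Xi i * Xi i.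

Definition even_part (A : M) : M := 2%:R^-1 *: (A + P * A * P).
Definition odd_part (A : M) : M := 2%:R^-1 *: (A - P * A * P).

(* rho(Sigma_k), Sigma_k = sum_{i_1<...<i_k} prod_{j=1}^k (x_{i_j} + (-1)^(k-j) xi_{i_j}).
   enum I lists the elements of I in increasing order; the element i in
   position j (1-based) is  (index i (enum I)).+1. *)
Definition Sigma (k : nat) : M :=
  \sum_(I : {set 'I_n} | #|I| == k)
     \prod_(i <- enum I) (xmx i + (-1) ^+ (k - (index i (enum I)).+1) *: Xi i).

Definition phiT11 (k : nat) : M := (-1) ^+ k *: even_part (Sigma k).
Definition phiTm11 (k : nat) : M := (-1) ^+ k *: odd_part (Sigma k).

(* The defining relation T_{i,j}(-u) = T_{-i,-j}(u) of YQ(1) gives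
   T^{(m)}_{1,-1} = (-1)^m T^{(m)}_{-1,1}; hence the image of T^{(1)}_{1,-1}. *)
Definition phiT1m1 (k : nat) : M := (-1) ^+ k *: phiTm11 k.

Definition scomm (pa pb : bool) (A B : M) : M :=
  A * B - (-1) ^+ (pa && pb) * (B * A).

(* eta_i = (-1/2)^i (ad T^{(2)}_{1,1})^i (T^{(1)}_{1,-1});
   T^{(2)}_{1,1} is even, T^{(1)}_{1,-1} is odd, so all eta_i are odd. *)
Definition eta (i : nat) : M :=
  (- 2%:R^-1) ^+ i *: iter i (scomm false true (phiT11 2)) (phiT1m1 1).

Definition Z (i : nat) : M := 2%:R^-1 *: scomm true true (eta 0) (eta (2 * i)).

End Module.

(* p-th elementary symmetric polynomial evaluated at s (0 for p > n, 1 for p = 0). *)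
Definition esym_val (K : fieldType) (n : nat) (s : 'I_n -> K) (p : nat) : K :=
  \sum_(I : {set 'I_n} | #|I| == p) \prod_(i in I) s i.

(* Main.v *)
Require Import Defs.
From HB Require Import structures.
From mathcomp Require Import all_boot all_order all_algebra.
From mathcomp Require Import complex.
From mathcomp Require Import reals.
From mathcomp Require Import ring zify.
Import Order.TTheory GRing.Theory Num.Theory.
Local Open Scope ring_scope.
Lemma sum_parity (K : numFieldType) (f : nat -> K) m :
  \sum_(j < (2 * m).+1) f j = \sum_(j < m.+1) f (2 * j)%N + \sum_(j < m) f (2 * j).+1.
Proof.
elim: m => [|m IH]; first by rewrite big_ord0 addr0 !big_ord1.
rewrite mulnS !addSn add0n (big_ord_recr (2 * m).+2) (big_ord_recr (2 * m).+1) /= IH.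
rewrite (big_ord_recr m.+1) /= [X in _ = _ + X](big_ord_recr m) /= mulnS !addSn add0n.
ring.
Qed.

Section Part2.
Variables (K : numFieldType) (N : nat).

Definition eqm (p q : {poly K}) := exists r, p = q + r * 'X^N.

Lemma eqm_coef p q k : eqm p q -> (k < N)%N -> p`_k = q`_k.
Proof. by case=> r ->  kN; rewrite coefD coefMXn kN addr0. Qed.

Lemma sum_gt (F : nat -> {poly K}) n i : (i < n)%N ->
  \sum_(j < n | (i < j)%N) F j = \sum_(i.+1 <= j < n) F j.
Proof.
move=> hi; rewrite -(big_mkord (fun j => (i < j)%N)).
rewrite (@big_cat_nat _ _ _ i.+1) //= big_nat_cond big1 ?add0r.
  by rewrite big_nat_cond [RHS]big_nat_cond; apply: eq_bigl => j; rewrite andbT; case: (i < j)%N; rewrite ?andbT ?andbF.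
by move=> j /andP[/andP[_ ji] ij]; move: ji; rewrite ltnS leqNgt ij.
Qed.

Lemma sum_lt (F : nat -> {poly K}) n i : (i <= n)%N ->
  \sum_(j < n | (j < i)%N) F j = \sum_(0 <= j < i) F j.
Proof.
move=> hi; rewrite -(big_mkord (fun j => (j < i)%N)).
rewrite (@big_cat_nat _ _ _ i) //= [X in _ + X]big_nat_cond [X in _ + X]big1 ?addr0.
  by rewrite big_nat_cond [RHS]big_nat_cond; apply: eq_bigl => j; case: (j < i)%N; rewrite ?andbT ?andbF.
by move=> j /andP[/andP[ij _] ji]; move: ij; rewrite leqNgt ji.
Qed.


Variables (n : nat) (sN : nat -> K) (cN : nat -> nat -> K).
Hypothesis n0 : (0 < n)%N.
Hypothesis c0 : forall i, cN 0 i = 1.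
Hypothesis cS : forall k i, (i < n)%N -> cN k.+1 i =
  \sum_(j < n | (i < j)%N) sN j * cN k j - \sum_(j < n | (j < i)%N) sN j * cN k j.
Hypothesis N0 : (0 < N)%N.

Definition cp i : {poly K} := \poly_(k < N) cN k i.
Definition aX j : {poly K} := sN j *: 'X.
Definition W j := aX j * cp j.

Lemma E0 i : (i < n)%N -> cp i =
  1 + (\sum_(j < n | (i < j)%N) W j - \sum_(j < n | (j < i)%N) W j) - (cN N i) *: 'X^N.
Proof.
move=> hi; apply/polyP => k.
rewrite coefB coefD coef1 coefB !coef_sum coefZ coefXn coef_poly.
have cW j : (W j)`_k = sN j * (if k == 0%N then 0 else if (k.-1 < N)%N then cN k.-1 j else 0).
  by rewrite /W /aX -scalerAl coefZ coefXM coef_poly.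
rewrite !(eq_bigr _ (fun (j : 'I_n) _ => cW j)).
clear cW; case: k => [|k] /=.
  have -> : (0 == N)%N = false by case: (N) N0.
  by rewrite N0 c0 !big1 ?subrr ?addr0 ?mulr0 ?subr0 // => j _; rewrite mulr0.
case: (ltngtP k.+1 N) => h.
- by rewrite cS // add0r mulr0 subr0.
- by rewrite mulr0 subr0 add0r !big1 ?subrr // => j _; rewrite mulr0.
- by rewrite mulr1 add0r -h -cS // subrr.
Qed.


Lemma E1 i : (i < n)%N ->
  eqm (cp i) (1 + (\sum_(i.+1 <= j < n) W j - \sum_(0 <= j < i) W j)).
Proof.
move=> hi; exists (- (cN N i)%:P).
by rewrite {1}(E0 _ hi) (sum_gt W _ _ hi) (sum_lt W _ _ (ltnW hi)) mulNr mul_polyC.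
Qed.

Lemma E2 i : (i.+1 < n)%N -> eqm (cp i.+1 + W i.+1) (cp i - W i).
Proof.
move=> hi.
have [r1 e1] := E1 _ hi; have [r2 e2] := E1 _ (ltnW hi).
move: e2; rewrite (big_ltn hi) => e2.
move: e1; rewrite big_nat_recr //= => e1.
by exists (r1 - r2); rewrite e1 e2; ring.
Qed.

Lemma E3 i : (i < n)%N ->
  eqm ((cp i + W i) * \prod_(0 <= k < i) (1 + aX k))
      ((cp 0 + W 0) * \prod_(0 <= k < i) (1 - aX k)).
Proof.
elim: i => [|i IH] hi.
  by rewrite !big_geq // !mulr1; exists 0; rewrite mul0r addr0.
have [r1 e1] := IH (ltnW hi); have [r2 e2] := E2 _ hi.
rewrite !big_nat_recr //=.
set PA := \prod_(0 <= k < i) (1 + aX k) in e1 *.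
set PB := \prod_(0 <= k < i) (1 - aX k) in e1 *.
clearbody PA PB; exists (r2 * PA * (1 + aX i) + r1 * (1 - aX i)).
rewrite e2.
have -> : (cp i - W i + r2 * 'X^N) * (PA * (1 + aX i)) =
  ((cp i + W i) * PA) * (1 - aX i) + r2 * PA * (1 + aX i) * 'X^N by rewrite /W; ring.
by rewrite e1; ring.
Qed.

Definition Tp := \sum_(0 <= j < n) W j.
Definition Ap := \prod_(0 <= k < n) (1 + aX k).
Definition Bp := \prod_(0 <= k < n) (1 - aX k).

Lemma E5 : eqm (Tp * (Ap + Bp)) (Ap - Bp).
Proof.
set n' := n.-1; have hn : n = n'.+1 by rewrite prednK.
have hn' : (n' < n)%N by rewrite hn.
have [r4 e4] : eqm (cp 0 + W 0) (1 + Tp).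
  have [r e] := E1 _ n0; exists r; rewrite e /Tp (big_ltn n0) (@big_geq _ _ _ 0 0) //; ring.
have [r5 e5] : eqm (cp n' - W n') (1 - Tp).
  have [r e] := E1 _ hn'; exists r.
  have e0 : \sum_(n'.+1 <= j < n) W j = 0 by rewrite big_geq // hn.
  have eT : Tp = \sum_(0 <= j < n') W j + W n' by rewrite /Tp hn big_nat_recr.
  rewrite e e0 eT; ring.
have [r3 e3] := E3 _ hn'.
have eA : Ap = \prod_(0 <= k < n') (1 + aX k) * (1 + aX n') by rewrite /Ap hn big_nat_recr.
have eB : Bp = \prod_(0 <= k < n') (1 - aX k) * (1 - aX n') by rewrite /Bp hn big_nat_recr.
move: e3 e5; rewrite e4 eA eB.
set PA := \prod_(0 <= k < n') (1 + aX k).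
set PB := \prod_(0 <= k < n') (1 - aX k).
rewrite /W.
move=> /eqP; rewrite -subr_eq0 => /eqP H3.
move=> /eqP; rewrite -subr_eq0 => /eqP H5.
exists (PA * (1 + aX n') * r5 - (1 - aX n') * (r3 + r4 * PB)).
apply/eqP; rewrite -subr_eq0; apply/eqP.
set c := cp n' in H3 H5 *.
clearbody PA PB c.
transitivity (- (1 - aX n') * ((c + aX n' * c) * PA - ((1 + Tp + r4 * 'X^N) * PB + r3 * 'X^N))
   + PA * (1 + aX n') * (c - aX n' * c - (1 - Tp + r5 * 'X^N))).
  ring.
by rewrite H3 H5; ring.
Qed.


Lemma cT0 : Tp`_0 = 0.
Proof.
by rewrite /Tp coef_sum big1 // => j _; rewrite /W /aX -scalerAl coefZ coefXM mulr0.
Qed.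

Lemma cT k : (k < N)%N -> Tp`_k.+1 = \sum_(j < n) sN j * cN k j.
Proof.
move=> hk; rewrite /Tp coef_sum big_mkord; apply: eq_bigr => j _.
by rewrite /W /aX -scalerAl coefZ coefXM coef_poly hk.
Qed.

Lemma part2_main (sg : nat -> K) m : N = (2 * m).+2 ->
  (forall p, Ap`_p = sg p) -> (forall p, Bp`_p = (-1)^+p * sg p) ->
  \sum_(j < m.+1) (\sum_(b < n) sN b * cN (2 * j)%N b) * sg (2 * (m - j))%N = sg (2 * m).+1.
Proof.
move=> hN hA hB.
have := eqm_coef _ _ (2 * m).+1 E5 ltac:(by rewrite hN).
rewrite coefB hA hB coefM big_ord_recl cT0 mul0r add0r.
rewrite (eq_bigr (fun i : 'I_(2 * m).+1 => (\sum_(b<n) sN b * cN i b) *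
     ((1 + (-1)^+((2 * m) - i)) * sg ((2 * m) - i)%N))); last first.
  move=> i _; rewrite lift0 cT; last by rewrite hN ltnS ltnW.
  by rewrite subSS coefD hA hB mulrDl mul1r.
rewrite (sum_parity _ (fun i => (\sum_(b<n) sN b * cN i b) *
     ((1 + (-1)^+((2 * m) - i)) * sg ((2 * m) - i)%N))).
rewrite [X in _ + X]big1 ?addr0; last first.
  move=> j _; rewrite -signr_odd oddB; last by have := ltn_ord j; lia.
  rewrite oddS !oddM /= expr1 subrr mul0r mulr0 //.

have e : forall j : 'I_m.+1, (1 + (-1)^+(2 * m - 2 * j)) * sg (2 * m - 2 * j)%N = 2%:R * sg (2 * (m - j))%N.
  by move=> j; rewrite -mulnBr -signr_odd oddM /= expr0; ring.
under eq_bigr => j _ do rewrite e.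
rewrite -signr_odd /= oddM /= expr1 => h.
have h2 : (2%:R : K) != 0 by rewrite pnatr_eq0.
apply: (mulfI h2); rewrite mulr_sumr.
under eq_bigr => j _ do rewrite mulrCA.
by rewrite h; ring.
Qed.

End Part2.
Lemma prod_coef (K : numFieldType) n (s : 'I_n -> K) (t : K) p :
  (\prod_(i < n) (1 + (t * s i) *: 'X))`_p = t^+p * esym_val s p.
Proof.
under eq_bigr => i _ do rewrite addrC.
rewrite bigA_distr coef_sum /esym_val mulr_sumr [RHS]big_mkcond /=.
apply: eq_big => // J _.
rewrite -(big_mkcond (fun i => i \in J)) /= scaler_prod prodr_const coefZ coefXn big_split /= prodr_const.
by case: eqP => [->|]; rewrite ?eqxx ?mulr1 ?mulr0 // eq_sym => /eqP /negbTE ->.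
Qed.
Lemma zmod_id4 (V : zmodType) (x y z w : V) :
  x + y + (- z - w) + (x - y + (z - w)) = (x - w) *+ 2.
Proof.
rewrite addrACA [x + y + _]addrACA subrr addr0 [- z - w + _]addrACA addNr add0r.
by rewrite addrACA mulr2n.
Qed.

Lemma expand2 (R : pzRingType) (a b c e : R) :
  (a - b) * (c + e) + (a + b) * (c - e) = (a * c - b * e) *+ 2.
Proof.
by rewrite !mulrDl !mulrDr !mulNr !mulrN zmod_id4.
Qed.

Section Part1.
Variables (K : numFieldType) (n d : nat) (P : 'M[K]_d.+1) (Xi : 'I_n -> 'M[K]_d.+1)
  (s : 'I_n -> K).
Hypothesis n0 : (0 < n)%N.
Hypothesis hmod : is_graded_hn_module P Xi.
Hypothesis hx : x_acts_by Xi s.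
Local Notation M := 'M[K]_d.+1.

Lemma hPP : P * P = 1. Proof. by case: hmod. Qed.
Lemma hPX i : P * Xi i = - (Xi i * P). Proof. by case: hmod. Qed.
Lemma hXX i j : i != j -> Xi i * Xi j + Xi j * Xi i = 0. Proof. by case: hmod => _ _ H; apply: H. Qed.

Lemma smulL (a : K) (A : M) : a%:M * A = a *: A.
Proof. by rewrite -mulmxE mul_scalar_mx. Qed.
Lemma smulR (a : K) (A : M) : A * a%:M = a *: A.
Proof. by rewrite -mulmxE mul_mx_scalar. Qed.

Definition ee (a b : 'I_n) : K := if a == b then 2%:R * s a else 0.

Lemma anti a b : Xi a * Xi b + Xi b * Xi a = (ee a b)%:M.
Proof.
rewrite /ee; have [->|h] := eqVneq a b; last by rewrite hXX // raddf0.
by rewrite hx -mulr2n -raddfMn /= mulr_natl.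
Qed.

Lemma anti' a b : Xi a * Xi b = (ee a b)%:M - Xi b * Xi a.
Proof. by rewrite -anti addrK. Qed.

Lemma PXP i : P * Xi i * P = - Xi i.
Proof. by rewrite hPX mulNr -mulrA hPP mulr1. Qed.

Lemma PcP (a : K) : P * a%:M * P = a%:M.
Proof. by rewrite smulR -scalerAl hPP scalemx1. Qed.

Lemma PmulP (A B : M) : P * (A * B) * P = (P * A * P) * (P * B * P).
Proof. by rewrite !mulrA -[P * A * P * P]mulrA hPP mulr1. Qed.

Lemma PaddP (A B : M) : P * (A + B) * P = P * A * P + P * B * P.
Proof. by rewrite mulrDr mulrDl. Qed.

Lemma PsubP (A B : M) : P * (A - B) * P = P * A * P - P * B * P.
Proof. by rewrite mulrBr mulrBl. Qed.

Lemma half2 (v : M) : 2%:R^-1 *: (v *+ 2) = v.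
Proof.
have h2 : (2%:R : K) != 0 by rewrite pnatr_eq0.
by rewrite -scaler_nat scalerA mulVf // scale1r.
Qed.


Lemma Sigma1 : Sigma Xi 1 = \sum_i (xmx Xi i + Xi i).
Proof.
rewrite /Sigma big_cards1; apply: eq_bigr => i _.
by rewrite enum_set1 big_cons big_nil /= eqxx /= expr0 scale1r mulr1.
Qed.

Lemma odd1 : odd_part P (Sigma Xi 1) = \sum_i Xi i.
Proof.
rewrite Sigma1 /odd_part mulr_sumr mulr_suml -sumrB scaler_sumr; apply: eq_bigr => i _.
rewrite PaddP /xmx hx PcP PXP opprD opprK addrACA subrr add0r -mulr2n.
exact: half2.
Qed.

Lemma enum2 (i j : 'I_n) : (i < j)%N -> enum [set i; j] = [:: i; j].
Proof.
move=> ij.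
have tr : transitive (fun x y : 'I_n => (x < y)%N) by move=> y x z; apply: ltn_trans.
apply: (irr_sorted_eq tr).
- by move=> x; rewrite ltnn.
- rewrite /enum_mem -enumT; apply: sorted_filter => //.
  by move: (iota_ltn_sorted 0 n); rewrite -val_enum_ord sorted_map enumT.
- by rewrite /= ij.
- by move=> x; rewrite mem_enum !inE.
Qed.


Lemma Sigma2 : Sigma Xi 2 =
  \sum_(i : 'I_n) \sum_(j : 'I_n | (i < j)%N) (xmx Xi i - Xi i) * (xmx Xi j + Xi j).
Proof.
pose i0 := Ordinal n0.
rewrite /Sigma (reindex_onto (fun p : 'I_n * 'I_n => [set p.1; p.2])
   (fun S => (nth i0 (enum S) 0, nth i0 (enum S) 1))) /=; last first.
  move=> S /eqP hS; have : size (enum S) = 2 by rewrite -cardE.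
  case e: (enum S) => [|x [|y [|]]] //= _.
  by apply/setP => z; rewrite !inE -mem_enum e !inE.
rewrite pair_big_dep /=.
have hpred : forall a b : 'I_n, (#|[set a; b]| == 2) &&
    ((nth i0 (enum [set a; b]) 0, nth i0 (enum [set a; b]) 1) == (a, b)) = (a < b)%N.
  move=> a b; rewrite cards2; case: (ltngtP a b) => h.
  - have ne : a != b by rewrite -(inj_eq val_inj) neq_ltn h.
    by rewrite enum2 //= ne /= eqxx.
  - have ne : b != a by rewrite -(inj_eq val_inj) neq_ltn h.
    by rewrite setUC enum2 //= xpair_eqE (negbTE ne) andbF.
  - have e : a = b by apply: val_inj.
    by rewrite e eqxx.
apply: eq_big => [[a b]|[a b]] /=; first by rewrite hpred.
rewrite hpred => ab.
have ne : a != b by rewrite -(inj_eq val_inj) neq_ltn ab.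
by rewrite enum2 // big_cons big_cons big_nil /= eqxx (negbTE ne) /= expr1 expr0 scale1r scaleN1r mulr1.
Qed.


Lemma eP (Q : pred 'I_n) (F : 'I_n -> M) :
  P * (\sum_(i | Q i) F i) * P = \sum_(i | Q i) P * F i * P.
Proof. by rewrite mulr_sumr mulr_suml. Qed.

Lemma eP2 (Q : 'I_n -> pred 'I_n) (F : 'I_n -> 'I_n -> M) :
  P * (\sum_i \sum_(j | Q i j) F i j) * P = \sum_i \sum_(j | Q i j) P * F i j * P.
Proof. by rewrite eP; apply: eq_bigr => i _; rewrite eP. Qed.

Lemma phiT11_2 : phiT11 P Xi 2 =
  \sum_(i : 'I_n) \sum_(j : 'I_n | (i < j)%N) ((s i * s j)%:M - Xi i * Xi j).
Proof.
rewrite /phiT11 -signr_odd /= expr0 scale1r /even_part Sigma2.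
rewrite eP2.
rewrite -big_split scaler_sumr; apply: eq_bigr => i _.
rewrite -big_split scaler_sumr; apply: eq_bigr => j _.
rewrite /= PmulP PsubP PaddP /xmx !hx !PcP !PXP opprK expand2 half2.
by rewrite smulL scale_scalar_mx.
Qed.


Definition LC (c : 'I_n -> K) : M := \sum_i c i *: Xi i.

Lemma tri i j k :
  Xi i * Xi j * Xi k - Xi k * (Xi i * Xi j) = ee k j *: Xi i - ee k i *: Xi j.
Proof.
rewrite mulrA (anti' k i) mulrBl smulL -[Xi i * Xi k * Xi j]mulrA (anti' k j) mulrBr smulR.
by rewrite mulrA opprB addrCA addrA subrK.
Qed.

Lemma sum_ee (c : 'I_n -> K) j : \sum_k c k * ee k j = 2%:R * s j * c j.
Proof.
rewrite (bigD1 j) //= big1 ?addr0 /ee ?eqxx; first by rewrite mulrC.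
by move=> k /negbTE ->; rewrite mulr0.
Qed.

Lemma triLC i j c :
  Xi i * Xi j * LC c - LC c * (Xi i * Xi j) =
  (2%:R * s j * c j) *: Xi i - (2%:R * s i * c i) *: Xi j.
Proof.
rewrite /LC mulr_sumr mulr_suml -sumrB.
under eq_bigr => k _ do rewrite -scalerAr -scalerAl -scalerBr tri scalerBr !scalerA.
by rewrite sumrB -!scaler_suml !sum_ee.
Qed.


Definition Lop (c : 'I_n -> K) (i : 'I_n) : K :=
  \sum_(j : 'I_n | (i < j)%N) s j * c j - \sum_(j : 'I_n | (j < i)%N) s j * c j.

Lemma subsub (V : zmodType) (a b c : V) : (a - b) - (a - c) = - (b - c).
Proof. by rewrite opprB addrC addrA subrK opprB. Qed.

Lemma comm_step c :
  phiT11 P Xi 2 * LC c - LC c * phiT11 P Xi 2 = (- 2%:R) *: LC (Lop c).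
Proof.
rewrite phiT11_2 mulr_suml mulr_sumr -sumrB.
under eq_bigr => i _ do rewrite mulr_suml mulr_sumr -sumrB.
under eq_bigr => i _ do under eq_bigr => j _ do
  rewrite mulrBl mulrBr smulL smulR subsub triLC opprB.
under eq_bigr => i _ do rewrite sumrB.
rewrite sumrB (exchange_big_dep predT) //=.
under eq_bigr => j _ do rewrite -scaler_suml.
under [X in _ - X]eq_bigr => i _ do rewrite -scaler_suml.
rewrite /LC scaler_sumr -sumrB; apply: eq_bigr => i _.
rewrite scalerA -scalerBl; congr (_ *: _).
rewrite /Lop.
under eq_bigr => j _ do rewrite -mulrA.
under [X in _ - X]eq_bigr => j _ do rewrite -mulrA.
rewrite -!mulr_sumr; ring.
Qed.


Definition citer k : 'I_n -> K := iter k Lop (fun _ => 1).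

Lemma phiT1m1_1 : phiT1m1 P Xi 1 = LC (fun _ => 1).
Proof.
rewrite /phiT1m1 /phiTm11 scalerA expr1 mulrNN mulr1 scale1r odd1 /LC.
by apply: eq_bigr => i _; rewrite scale1r.
Qed.

Lemma iter_comm k : iter k (scomm false true (phiT11 P Xi 2)) (LC (fun _ => 1)) =
  (- 2%:R)^+k *: LC (citer k).
Proof.
elim: k => [|k IH]; first by rewrite expr0 scale1r.
have hs : forall A B : M, scomm false true A B = A * B - B * A.
  by move=> A B; rewrite /scomm /= expr0 mul1r.
have hl : forall (A B : M) (a : K), A * (a *: B) - (a *: B) * A = a *: (A * B - B * A).
  by move=> A B a; rewrite -scalerAr -scalerAl scalerBr.
rewrite iterS IH hs hl comm_step.
by rewrite scalerA exprS mulrC.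
Qed.

Lemma eta_LC k : Defs.eta P Xi k = LC (citer k).
Proof.
rewrite /Defs.eta phiT1m1_1 iter_comm scalerA -exprMn mulrNN mulVf ?pnatr_eq0 //.
by rewrite expr1n scale1r.
Qed.

Lemma anti_LC c c' :
  LC c * LC c' + LC c' * LC c = (2%:R * \sum_a c a * c' a * s a)%:M.
Proof.
rewrite /LC !mulr_suml.
under eq_bigr => a _ do rewrite mulr_sumr.
under [X in _ + X]eq_bigr => b _ do rewrite mulr_sumr.
rewrite [X in _ + X]exchange_big -big_split /= mulr_sumr raddf_sum.
apply: eq_bigr => a _; rewrite -big_split /=.
rewrite (bigD1 a) //= big1 ?addr0.
  rewrite -!scalerAl -!scalerAr !scalerA [c' a * c a]mulrC -scalerDr anti /ee eqxx.
  by rewrite scale_scalar_mx; congr (_%:M); ring.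
move=> b hb; rewrite -!scalerAl -!scalerAr !scalerA [c' b * c a]mulrC -scalerDr anti /ee.
by rewrite eq_sym (negbTE hb) raddf0 scaler0.
Qed.

Lemma Z_scalar i : Z P Xi i = (\sum_a citer (2 * i) a * s a)%:M.
Proof.
have h2 : (2%:R : K) != 0 by rewrite pnatr_eq0.
have hs : forall A B : M, scomm true true A B = A * B + B * A.
  by move=> A B; rewrite /scomm /= expr1 mulN1r opprK.
rewrite /Z hs !eta_LC anti_LC scale_scalar_mx mulrA mulVf // mul1r.
by congr (_%:M); apply: eq_bigr => a _; rewrite /= mul1r.
Qed.

End Part1.
Theorem corollary5p5 (R : realType) (n d : nat) (s : 'I_n -> R[i])
    (P : 'M[R[i]]_d.+1) (Xi : 'I_n -> 'M[R[i]]_d.+1) :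
  (0 < n)%N ->
  is_graded_hn_module P Xi ->
  x_acts_by Xi s ->
  graded_simple P Xi ->
  exists chi : nat -> R[i],
    (forall i : nat, Z P Xi i = (chi i)%:M) /\
    (forall m : nat,
       \sum_(j < m.+1) chi j * esym_val s (2 * (m - j)) = esym_val s (2 * m).+1).
Proof.
move=> n0 hmod hx _.
exists (fun i => \sum_a citer _ n s (2 * i) a * s a).
split; first by move=> i; apply: Z_scalar.
move=> m.
pose sN (j : nat) : R[i] := if insub j is Some i then s i else 0.
pose cN (k j : nat) : R[i] := if insub j is Some i then citer _ n s k i else 1.
have hsN : forall i : 'I_n, sN i = s i by move=> i; rewrite /sN valK.
have hcN : forall k (i : 'I_n), cN k i = citer _ n s k i by move=> k i; rewrite /cN valK.
have c0 : forall i, cN 0%N i = 1 by move=> i; rewrite /cN; case: insub.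
have cS : forall k i, (i < n)%N -> cN k.+1 i =
    \sum_(j < n | (i < j)%N) sN j * cN k j - \sum_(j < n | (j < i)%N) sN j * cN k j.
  move=> k i hi; have -> : i = val (Ordinal hi) by [].
  rewrite hcN /citer iterS -/(citer _ n s k) /Lop.
  by congr (_ - _); apply: eq_bigr => j _; rewrite hsN hcN.
have hA : forall p, (Ap _ n sN)`_p = esym_val s p.
  move=> p; rewrite /Ap big_mkord.
  under eq_bigr => i _ do rewrite /aX hsN -[s i]mul1r.
  by rewrite prod_coef expr1n mul1r.
have hB : forall p, (Bp _ n sN)`_p = (-1)^+p * esym_val s p.
  move=> p; rewrite /Bp big_mkord.
  under eq_bigr => i _ do rewrite /aX hsN -scaleNr -mulN1r.
  by rewrite prod_coef.
have := part2_main _ ((2 * m).+2) n sN cN n0 c0 cS (ltn0Sn _) (esym_val s) m erefl hA hB.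
move=> <-; apply: eq_bigr => j _; congr (_ * _).
by apply: eq_bigr => b _; rewrite hsN hcN mulrC.
Qed.
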